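(* Suppose $D$ is a balanced effective divisor class on $X$ with $\chi(D)\ge1$, and $A_t$ is an ample divisor with $2A_t\cdot D\le A_t\cdot K$. Suppose $D$ is $\ell$ steps away from having equal multiplicities. Then $$\ell<\frac12\left(n-\sqrt{(8\chi(D)+1)n}\right).$$ In particular, if $10\le n\le 12$, then $\chi(D)=1$, $\ell=0$, and $D$ has equal multiplicities.
   Context: Let $X$ be the blowup of $\mathbb{P}^2_{\mathbb{C}}$ at $n$ very general points, with $H$ the pullback of a line class, $E_i$ the exceptional divisors, $E=\sum_iE_i$, and $K=K_X=-3H+E$. For real $t$, $A_t=tH-E$. Write $\chi(D)=\chi(\mathcal{O}_X(D))$; effective means the class of an effective divisor (zero allowed). A divisor $D=dH-\sum_im_iE_i$ is balanced if $|m_i-m_j|\le1$ for all $i,j$. For a balanced $D$, there are $k$ indices with multiplicity $m+1$ and $n-k$ indices with multiplicity $m$ for some $m$ and $0\le k\le n$; setting $\ell=\min\{k,n-k\}$, $D$ is said to be $\ell$ steps away from having equal multiplicities. *)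

(* Defs.v *)
From HB Require Import structures.
From mathcomp Require Import all_boot all_order all_algebra.
From mathcomp Require Import reals.
From mathcomp Require Import complex.
From mathcomp Require Import mpoly.

Set Implicit Arguments.
Unset Strict Implicit.
Unset Printing Implicit Defensive.

Import Order.TTheory GRing.Theory Num.Theory.
Local Open Scope ring_scope.

(* A configuration of n points of P^2 is
   given by a vector v : 'I_(n*3) -> R[i] of homogeneous coordinates; the
   i-th point has coordinates (fun j : 'I_3 => v (mxvec_index i j)). *)

Section BlowupDefs.
Variables (R : realType) (n : nat).
Local Notation C := (R[i])%C.

Definition pt (v : 'I_(n * 3) -> C) (i : 'I_n) : 'I_3 -> C :=
  fun j => v (mxvec_index i j).

Definition config_ok (v : 'I_(n * 3) -> C) : Prop :=
  forall i : 'I_n, exists j : 'I_3, pt v i j != 0.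

Definition mult_ge (f : {mpoly C[3]}) (p : 'I_3 -> C) (m : int) : Prop :=
  forall a : 'X_{1..3}, ((mdeg a)%:Z < m)%R -> (f^`M[a]).@[p] = 0.

(* A divisor class D = d H - sum_i m_i E_i is represented by (d, m). *)

(* intersection form: H^2 = 1, E_i^2 = -1, H.E_i = E_i.E_j = 0 (i<>j) *)
Definition inter (d : int) (m : 'I_n -> int) (d' : int) (m' : 'I_n -> int)
  : int := d * d' - \sum_(i < n) m i * m' i.

(* canonical class K = -3H + E = -3H - sum_i (-1) E_i *)
Definition Kd : int := -3.
Definition Km : 'I_n -> int := fun _ => -1.

(* Euler characteristic chi(O_X(D)) via Riemann-Roch on the surface X:
   chi(D) = 1 + (D.D - D.K)/2  (the numerator is always even) *)
Definition chi (d : int) (m : 'I_n -> int) : int :=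
  1 + divz (inter d m d m - inter d m Kd Km) 2.

(* D is effective: H^0(X, O_X(dH - sum m_i E_i)) <> 0, i.e. there is a
   nonzero homogeneous polynomial of degree d vanishing to order >= m_i
   at the i-th point (zero divisor allowed: f constant) *)
Definition effective (v : 'I_(n * 3) -> C) (d : int) (m : 'I_n -> int)
  : Prop :=
  exists f : {mpoly C[3]},
    [/\ f != 0, (0 <= d)%R, f \is (`|d|%N).-homog
      & forall i : 'I_n, mult_ge f (pt v i) (m i)].

Definition irred_homog (f : {mpoly C[3]}) (e : nat) : Prop :=
  [/\ (0 < e)%N, f \is e.-homog, f != 0 &
      forall g h : {mpoly C[3]}, f = g * h -> (msize g <= 1)%N \/ (msize h <= 1)%N].

(* intersection number A_t . D for the R-divisor A_t = tH - E *)
Definition interA (t : R) (d : int) (m : 'I_n -> int) : R :=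
  t * d%:~R - \sum_(i < n) (m i)%:~R.

(* A_t = tH - E is ample (Nakai-Moishezon): A_t^2 = t^2 - n > 0 and
   A_t . C > 0 for every irreducible curve C on X.  The irreducible curves
   are the E_i (A_t . E_i = 1 > 0) and the strict transforms of irreducible
   plane curves f of degree e, of class eH - sum_i mult_{p_i}(f) E_i. *)
Definition ample (v : 'I_(n * 3) -> C) (t : R) : Prop :=
  (n%:R < t ^+ 2) /\
  forall (f : {mpoly C[3]}) (e : nat) (mu : 'I_n -> nat),
    irred_homog f e -> (forall i, mult_ge f (pt v i) (mu i)%:Z) ->
    \sum_(i < n) (mu i)%:R < t * e%:R.

Definition balanced (m : 'I_n -> int) : Prop :=
  forall i j : 'I_n, (`|m i - m j| <= 1)%R.

Definition steps_away (m : 'I_n -> int) (l : nat) : Prop :=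
  exists (mm : int) (k : nat),
    [/\ (k <= n)%N, (forall i, m i = mm \/ m i = mm + 1),
        #|[set i | m i == mm + 1]| = k & l = minn k (n - k)].

(* a property holds for n very general points: it holds outside a countable
   union of proper Zariski-closed subsets of the configuration space *)
Definition very_general (P : ('I_(n * 3) -> C) -> Prop) : Prop :=
  exists Q : nat -> {mpoly C[n * 3]},
    (forall k, Q k != 0) /\
    forall v, config_ok v -> (forall k, (Q k).@[v] != 0) -> P v.

End BlowupDefs.

(* Main.v *)
Require Import Defs.
From HB Require Import structures.
From mathcomp Require Import all_boot all_order all_algebra.
From mathcomp Require Import reals.
From mathcomp Require Import complex.
From mathcomp Require Import mpoly.
From mathcomp Require Import ring lra zify.
Import Order.TTheory GRing.Theory Num.Theory.
Local Open Scope ring_scope.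

Lemma irrX (R : realType) : irred_homog ('X_(0 : 'I_3) : {mpoly (R[i])%C[3]}) 1.
Proof.
split => //.
- by rewrite dhomogX /= mdeg1.
- by rewrite -msize_poly_eq0 msizeX mdeg1.
move=> g h E.
have Hs : msize (g * h) = 2%N by rewrite -E msizeX mdeg1.
have g0 : g != 0 by apply/eqP => g0; move: Hs; rewrite g0 mul0r msize0.
have h0 : h != 0 by apply/eqP => h0; move: Hs; rewrite h0 mulr0 msize0.
move: Hs; rewrite msizeM //.
move=> H.
have Hg := msize_poly_eq0 g; have Hh := msize_poly_eq0 h.
rewrite (negbTE g0) in Hg; rewrite (negbTE h0) in Hh.
move: H Hg Hh; case: (msize g) => [|a]; case: (msize h) => [|b] //=.
move=> + _ _; case: a => [|a]; first by move=> _; left.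
case: b => [|b]; first by move=> _; right.
by rewrite !addSn !addnS.
Qed.

Lemma aux_n {c : int} {L n : nat} : 1 <= c -> (2 * L <= n)%N ->
  (8 * c + 1) * n%:Z < (n%:Z - 2 * L%:Z) ^+ 2 -> (n%:Z - 2 * L%:Z) ^+ 2 <= n%:Z * n%:Z.
Proof. move=> h1 h2 h3; rewrite expr2; nia. Qed.
Lemma aux (c : int) (L n : nat) : (10 <= n <= 12)%N -> 1 <= c -> (2 * L <= n)%N ->
  (8 * c + 1) * n%:Z < (n%:Z - 2 * L%:Z) ^+ 2 -> c = 1 /\ L = 0%N.
Proof.
move=> hn h1 h2 h3; have h4 := aux_n h1 h2 h3.
have hn3 : n = 10%N \/ n = 11%N \/ n = 12%N by lia.
have c1 : c = 1.
  move: hn3 h3 h4 => [|[|]] -> h3 h4; lia.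
split => //; subst c.
move: hn3 h3 => [|[|]] ->; rewrite expr2; nia.
Qed.

Theorem proposition4p6 (R : realType) (n : nat) :
  very_general (fun v : 'I_(n * 3) -> (R[i])%C =>
    forall (d : int) (m : 'I_n -> int) (l : nat) (t : R),
      effective v d m -> balanced m -> (1 <= chi d m)%R ->
      ample v t ->
      2 * interA t d m <= interA t Kd (@Km n) ->
      steps_away m l ->
      (l%:R : R) < (n%:R - Num.sqrt ((8 * (chi d m)%:~R + 1) * n%:R : R)) / 2
      /\ ((10 <= n <= 12)%N ->
          [/\ chi d m = 1, l = 0%N & forall i j : 'I_n, m i = m j])).
Proof.
exists (fun _ => 1); split; first by move=> _; exact: oner_neq0.
move=> v _ _ d m l t [f [_ d0 _ _]] bal chi1 [tn amp] hA [mm [k [kn hm hk ->]]].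
have t0 : 0 < t.
  have := amp _ 1%N (fun _ => 0%N) (irrX R).
  rewrite big1 // mulr1; apply => i a /=.
  by rewrite ltNge; case: (mdeg a).
pose b i : R := (m i == mm + 1)%:R.
have hr i : (m i)%:~R = mm%:~R + b i :> R.
  rewrite /b; case: (hm i) => ->.
    by rewrite (_ : (mm == mm + 1) = false) ?addr0 //; lia.
  by rewrite eqxx intrD.
have sb : \sum_i b i = k%:R.
  rewrite /b -hk -sumr_const [RHS]big_mkcond /=; apply: eq_bigr => i _.
  by rewrite inE; case: eqP.
have sb2 : \sum_i b i ^+ 2 = k%:R.
  by rewrite -sb; apply: eq_bigr => i _; rewrite /b; case: eqP; rewrite ?expr1n ?expr0n.
have s1 : \sum_i ((m i)%:~R : R) = n%:R * mm%:~R + k%:R.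
  under eq_bigr do rewrite hr.
  by rewrite big_split /= sb sumr_const card_ord mulr_natl.
have s2 : \sum_i ((m i)%:~R : R) ^+ 2 = n%:R * mm%:~R ^+ 2 + 2 * mm%:~R * k%:R + k%:R.
  have e1 : \sum_i ((m i)%:~R : R) ^+ 2 = \sum_i (mm%:~R ^+ 2 + (2 * mm%:~R) * b i + b i ^+ 2).
    by apply: eq_bigr => i _; rewrite hr; ring.
  have e2 : \sum_i (2 * mm%:~R) * b i = 2 * mm%:~R * k%:R :> R by rewrite -sb mulr_sumr.
  rewrite e1 !big_split /= sb2 e2 sumr_const card_ord.
  by rewrite -[mm%:~R ^+ 2 *+ n]mulr_natl.
have hcz : 2 * (chi d m - 1) <= inter d m d m - inter d m Kd (@Km n).
  rewrite /chi addrC addKr mulrC; exact: lez_floor.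
set c := chi d m in hcz chi1 *; clearbody c.
have hc : 2 * (c%:~R - 1) <= (d%:~R : R) ^+ 2 + 3 * d%:~R - (\sum_i ((m i)%:~R : R) ^+ 2 + \sum_i (m i)%:~R).
  move: hcz; rewrite -(ler_int R) /inter /Kd /Km.
  rewrite !(rmorphM, rmorphB, rmorphD, rmorph_sum, rmorphN, rmorph1) /=.
  under eq_bigr do rewrite rmorphM /=.
  have -> : \sum_i ((m i * -1)%:~R : R) = - \sum_i (m i)%:~R.
    by rewrite -sumrN; apply: eq_bigr => i _; rewrite rmorphM /= mulrN1.
  have -> : \sum_i ((m i)%:~R : R) ^+ 2 = \sum_i (m i)%:~R * (m i)%:~R by apply: eq_bigr => i _; rewrite expr2.
  move=> h; lra.
rewrite s1 s2 in hc.
move: hA; rewrite /interA /Kd /Km sumr_const card_ord s1.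
rewrite !(rmorphN, rmorph1) /= mulNrn (_ : 3%:~R = 3 :> R) // => hA.
have tpos := t0.
have hd : 0 <= (d%:~R : R) by rewrite ler0z.
set nr : R := n%:R; set kr : R := k%:R; set dr : R := d%:~R; set mr : R := mm%:~R; set cr : R := c%:~R.
have hn : 0 <= nr by rewrite /nr ler0n.
set X := nr * (2 * mr + 1) + 2 * kr.
have hX1 : (2 * dr + 3) * t <= X by rewrite /X; lra.
have hX0 : 0 < X by apply: lt_le_trans hX1; apply: mulr_gt0 => //; lra.
have hX : (2 * dr + 3) ^+ 2 * nr < X ^+ 2.
  apply: (lt_le_trans (y := (2 * dr + 3) ^+ 2 * t ^+ 2)).
    by rewrite ltr_pM2l // exprn_gt0 //; lra.
  rewrite -exprMn ler_pXn2r // ?nnegrE; [by apply: mulr_ge0; lra|lra].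
have hcn : nr * (2 * (cr - 1)) <= nr * (dr ^+ 2 + 3 * dr -
    (nr * mr ^+ 2 + 2 * mr * kr + kr + (nr * mr + kr))) by apply: ler_wpM2l.
have G : 4 * kr * (nr - kr) < nr * (nr - 8 * cr - 1).
  rewrite /X in hX.
  nra.
have Gz : 4 * k%:Z * (n%:Z - k%:Z) < n%:Z * (n%:Z - 8 * c - 1).
  rewrite -(ltr_int R) !(rmorphM, rmorphB, rmorphD, rmorph1) /=.
  exact: G.
have hl2 : (2 * minn k (n - k) <= n)%N by move: kn; clear; lia.
have key : (8 * c + 1) * n%:Z < (n%:Z - 2 * (minn k (n - k))%:Z) ^+ 2.
  have E : k%:Z * (n%:Z - k%:Z) = (minn k (n - k))%:Z * (n%:Z - (minn k (n - k))%:Z).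
    case: (leqP k (n - k)) => h; first by [].
    have e : Posz (n - k)%N = n%:Z - k%:Z by move: kn; clear; lia.
    rewrite e; ring.
  have : 4 * k%:Z * (n%:Z - k%:Z) = n%:Z ^+ 2 - (n%:Z - 2 * (minn k (n - k))%:Z) ^+ 2.
    by rewrite -mulrA E; ring.
  move=> H4; move: Gz; rewrite H4; clear; lia.
set L := minn k (n - k) in hl2 key *.
have hc1 : (10 <= n <= 12)%N -> c = 1 /\ L = 0%N.
  by move=> hn10; exact: (aux _ _ _ hn10 chi1 hl2 key).
split.
  have keyR : (8 * cr + 1) * nr < (nr - 2 * L%:R) ^+ 2.
    move: key; rewrite -(ltr_int R) !(rmorphM, rmorphB, rmorphD, rmorph1, rmorphXn) /=.
    done.
  have w0 : 2 * (L%:R : R) <= nr by rewrite /nr -natrM ler_nat.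
  have hs : Num.sqrt ((8 * cr + 1) * nr) < nr - 2 * L%:R.
    rewrite -[X in _ < X](@ger0_norm _ (nr - 2 * L%:R)); last by lra.
    rewrite -sqrtr_sqr ltr_sqrt //.
    apply: le_lt_trans keyR; apply: mulr_ge0 => //.
    rewrite /cr; have : (1 <= c%:~R :> R) by rewrite ler1z.
    lra.
  lra.
move=> hn10; have [c1 L0] := hc1 hn10; split => //.
have mi : (forall i, m i = mm) \/ (forall i, m i = mm + 1).
  have : k = 0%N \/ k = n by move: L0; rewrite /L; clear -kn; lia.
  case=> Ek.
    left => i; move: hk; rewrite Ek => /cards0_eq /setP /(_ i); rewrite !inE.
    by case: (hm i) => -> //; rewrite eqxx.
  right => i.
  have : [set i | m i == mm + 1] = setT.
    by apply/eqP; rewrite eqEcard subsetT cardsT card_ord hk Ek leqnn.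
  by move/setP/(_ i); rewrite !inE => /eqP.
by case: mi => h i j; rewrite !h.
Qed.
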